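(* Let $c\in(0,\infty)$, $\lambda_\pm=(1\pm c^{-1/2})^2$, and for $x>\lambda_+$ let $$\mathcal T(x)=\frac{x-(1+c^{-1})-\sqrt{(x-\lambda_+)(x-\lambda_-)}}{2c^{-1}}.$$ Let $d_1>d_2>\dots>d_s>c^{-1/4}$, $p(d)=\frac{(d^2+1)(d^2+c^{-1})}{d^2}$, $p_i=p(d_i)$, and $T^s(x)=\prod_{i=1}^s(\mathcal T(x)-d_i^{-2})$. Then: (1) the equation $T^s(x)=0$ ($x>\lambda_+$) has $s$ solutions, namely $p_1,\dots,p_s$; (2) $T^s$ has $s-1$ critical points $x_1,\dots,x_{s-1}$ with $x_i\in(p_{i+1},p_i)$, $i=1,\dots,s-1$; (3) $\mathcal T$ is strictly decreasing on $(\lambda_+,\infty)$.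
   Context: $\mathcal T(x)$ equals $x\,m_{1c}(x)m_{2c}(x)$, where $m_{1c},m_{2c}$ are the Stieltjes transforms of the limiting (Marchenko–Pastur) spectral distributions of $XX^*$ and $X^*X$ with aspect ratio $N/M\to c$. *)

(* Defs.v *)
From Stdlib Require Import Reals Lra.
From Coquelicot Require Import Coquelicot.
Open Scope R_scope.

Definition lam_plus (c : R) : R := (1 + / sqrt c) ^ 2.
Definition lam_minus (c : R) : R := (1 - / sqrt c) ^ 2.

Definition calT (c x : R) : R :=
  (x - (1 + / c) - sqrt ((x - lam_plus c) * (x - lam_minus c))) / (2 * / c).

Definition pfun (c dd : R) : R := (dd ^ 2 + 1) * (dd ^ 2 + / c) / dd ^ 2.

Fixpoint Tprod (c : R) (d : nat -> R) (n : nat) (x : R) : R :=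
  match n with
  | O => 1
  | S m => Tprod c d m x * (calT c x - / (d (S m)) ^ 2)
  end.

(* Main.v *)
Require Import Defs.
From Stdlib Require Import Reals Lra Lia Arith ClassicalEpsilon.
From Coquelicot Require Import Coquelicot.
Open Scope R_scope.

Definition hh (c t : R) := 1 + / c + / c * t + / t.

Lemma inv_sqrt_sq c : 0 < c -> / c = / sqrt c * / sqrt c.
Proof.
  intros Hc. rewrite <- Rinv_mult. rewrite sqrt_sqrt; lra.
Qed.

Lemma Q_eq c x : 0 < c ->
  (x - lam_plus c) * (x - lam_minus c) = (x - 1 - / c) ^ 2 - 4 * / c.
Proof.
  intros Hc. unfold lam_plus, lam_minus. rewrite (inv_sqrt_sq c Hc). ring.
Qed.

Lemma T_facts c x : 0 < c -> lam_plus c < x ->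
  0 < calT c x /\ / sqrt c * calT c x < 1 /\ x = hh c (calT c x) /\
  exists D, is_derive (calT c) x D /\ D <> 0.
Proof.
  intros Hc Hx.
  assert (Hs : 0 < sqrt c) by (apply sqrt_lt_R0; lra).
  assert (Hr : 0 < / sqrt c) by (apply Rinv_0_lt_compat; lra).
  set (r := / sqrt c) in *.
  assert (Ha : / c = r * r) by (apply inv_sqrt_sq; lra).
  assert (Hlp : lam_plus c = (1 + r) ^ 2) by reflexivity.
  set (u := x - 1 - / c).
  assert (Hu : 2 * r < u) by (unfold u; rewrite Ha; rewrite Hlp in Hx; nra).
  pose proof (Q_eq c x Hc) as HQ.
  assert (HQp : 0 < (x - lam_plus c) * (x - lam_minus c)).
  { rewrite HQ. fold u. rewrite Ha. nra. }
  set (Q := (x - lam_plus c) * (x - lam_minus c)) in *.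
  assert (Hw2 : sqrt Q * sqrt Q = Q) by (apply sqrt_sqrt; lra).
  assert (Hw : 0 < sqrt Q) by (apply sqrt_lt_R0; lra).
  set (w := sqrt Q) in *.
  assert (HQ' : Q = u ^ 2 - 4 * (r * r)) by (rewrite HQ; unfold u; rewrite Ha; reflexivity).
  assert (Hwu : w < u) by nra.
  assert (HT : calT c x = (u - w) / (2 * (r * r))).
  { unfold calT. fold Q. fold w. unfold u. rewrite <- Ha. f_equal. ring. }
  assert (Hrr : 0 < r * r) by nra.
  split; [|split; [|split]].
  - rewrite HT. apply Rdiv_lt_0_compat; lra.
  - rewrite HT.
    assert (u - 2 * r < w) by nra.
    replace (r * ((u - w) / (2 * (r * r)))) with ((u - w) / (2 * r)) by (field; lra).
    apply (Rmult_lt_reg_r (2 * r)); [lra|].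
    unfold Rdiv. rewrite Rmult_assoc, Rinv_l; lra.
  - unfold hh. rewrite HT. rewrite Ha.
    assert (u - w <> 0) by lra.
    apply (Rplus_eq_reg_r (- 1 - r * r)).
    transitivity u; [unfold u; rewrite Ha; ring|].
    rewrite HQ in Hw2. fold u in Hw2. rewrite Ha in Hw2.
    assert (Hi : / ((u - w) / (2 * (r * r))) = (u + w) / 2).
    { rewrite Rinv_div. field_simplify_eq; [|lra]. nra. }
    rewrite Hi. field. lra.
  - eexists. split.
    + unfold calT. auto_derive. exact HQp. reflexivity.
    + replace (sqrt ((x + - lam_plus c) * (x + - lam_minus c))) with w by reflexivity.
      assert (Heq : (1 * (x + - lam_minus c) + (x + - lam_plus c) * 1) = 2 * u).
      { unfold u. unfold lam_plus, lam_minus. fold r. rewrite Ha. ring. }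
      rewrite Heq.
      intro H0. apply Rmult_integral in H0. destruct H0 as [H0|H0].
      * assert (H1 : 2 * u * / (2 * w) = u / w) by (field; lra).
        rewrite H1 in H0.
        assert (H2 : u / w > 1).
        { apply (Rmult_lt_reg_r w); [lra|]. unfold Rdiv. rewrite Rmult_assoc, Rinv_l; lra. }
        lra.
      * assert (H3 : 2 * / c <> 0) by (rewrite Ha; nra).
        apply (Rinv_neq_0_compat _ H3). exact H0.
Qed.

Lemma hh_dec c s t : 0 < c -> 0 < s < t -> / sqrt c * t <= 1 -> hh c t < hh c s.
Proof.
  intros Hc Hst Ht.
  assert (Hs : 0 < sqrt c) by (apply sqrt_lt_R0; lra).
  assert (Hr : 0 < / sqrt c) by (apply Rinv_0_lt_compat; lra).
  set (r := / sqrt c) in *.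
  assert (Ha : / c = r * r) by (apply inv_sqrt_sq; lra).
  unfold hh. rewrite Ha.
  assert (Hrs : r * s < r * t) by nra.
  assert (Hp : r * s * (r * t) < 1).
  { apply Rle_lt_trans with (r * s * 1); [|nra]. apply Rmult_le_compat_l; nra. }
  assert (/ s - / t = (t - s) / (s * t)) by (field; lra).
  assert ((t - s) / (s * t) > r * r * t - r * r * s).
  { apply (Rmult_lt_reg_r (s * t)); [nra|].
    replace ((t - s) / (s * t) * (s * t)) with (t - s) by (field; lra). nra. }
  lra.
Qed.

Lemma T_dec c x y : 0 < c -> lam_plus c < x -> x < y -> calT c y < calT c x.
Proof.
  intros Hc Hx Hxy.
  destruct (T_facts c x Hc Hx) as [Hx1 [Hx2 [Hx3 _]]].
  destruct (T_facts c y Hc ltac:(lra)) as [Hy1 [Hy2 [Hy3 _]]].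
  destruct (Rtotal_order (calT c y) (calT c x)) as [H|[H|H]]; auto.
  - rewrite H in Hy3. lra.
  - pose proof (hh_dec c (calT c x) (calT c y) Hc ltac:(lra) ltac:(lra)). lra.
Qed.

Lemma lam_plus_hh c : 0 < c -> lam_plus c = hh c (sqrt c).
Proof.
  intros Hc. assert (Hs : 0 < sqrt c) by (apply sqrt_lt_R0; lra).
  unfold lam_plus, hh. rewrite (inv_sqrt_sq c Hc). field. lra.
Qed.

Lemma T_eq c x e : 0 < c -> lam_plus c < x -> 0 < e -> / sqrt c * e < 1 ->
  (calT c x = e <-> x = hh c e).
Proof.
  intros Hc Hx He1 He2.
  destruct (T_facts c x Hc Hx) as [Hx1 [Hx2 [Hx3 _]]].
  split.
  - intros <-. exact Hx3.
  - intros Hxe.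
    destruct (Rtotal_order (calT c x) e) as [H|[H|H]]; auto.
    + pose proof (hh_dec c (calT c x) e Hc ltac:(lra) ltac:(lra)). lra.
    + pose proof (hh_dec c e (calT c x) Hc ltac:(lra) ltac:(lra)). lra.
Qed.

Lemma pfun_hh c dd : 0 < c -> dd <> 0 -> pfun c dd = hh c (/ dd ^ 2).
Proof. intros. unfold pfun, hh. field. split; auto; lra. Qed.

Lemma e_bounds c dd : 0 < c -> Rpower c (- / 4) < dd ->
  0 < dd /\ 0 < / dd ^ 2 /\ / sqrt c * / dd ^ 2 < 1.
Proof.
  intros Hc Hd.
  assert (Hq : 0 < Rpower c (- / 4)) by (unfold Rpower; apply exp_pos).
  assert (Hq2 : Rpower c (- / 4) * Rpower c (- / 4) = / sqrt c).
  { rewrite <- Rpower_plus. replace (- / 4 + - / 4) with (- / 2) by field.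
    rewrite Rpower_Ropp, Rpower_sqrt; auto. }
  assert (Hd0 : 0 < dd) by lra.
  assert (Hdd : 0 < dd ^ 2) by (apply pow_lt; lra).
  split; [lra|split].
  - apply Rinv_0_lt_compat; lra.
  - rewrite <- Hq2. apply (Rmult_lt_reg_r (dd ^ 2)); [lra|].
    rewrite Rmult_assoc, Rinv_l; [|lra]. simpl. nra.
Qed.

Fixpoint Pp (e : nat -> R) (n : nat) (t : R) : R :=
  match n with O => 1 | S m => Pp e m t * (t - e (S m)) end.
Fixpoint DPp (e : nat -> R) (n : nat) (t : R) : R :=
  match n with O => 0 | S m => DPp e m t * (t - e (S m)) + Pp e m t end.
Fixpoint Ss (e : nat -> R) (n : nat) (t : R) : R :=
  match n with O => 0 | S m => Ss e m t + / (t - e (S m)) end.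

Definition incr (e : nat -> R) (n : nat) := forall i, (1 <= i < n)%nat -> e i < e (S i).

Lemma incr_le e n m : incr e n -> (m <= n)%nat -> incr e m.
Proof. intros H Hm i Hi. apply H. lia. Qed.

Lemma incr_lt e n : incr e n -> forall i j, (1 <= i)%nat -> (i < j)%nat -> (j <= n)%nat -> e i < e j.
Proof.
  intros H i j Hi Hij. induction Hij as [|j Hj IH]; intros Hn.
  - apply H; lia.
  - apply Rlt_trans with (e j). apply IH; lia. apply H; lia.
Qed.

Lemma incr_le' e n : incr e n -> forall i j, (1 <= i)%nat -> (i <= j)%nat -> (j <= n)%nat -> e i <= e j.
Proof.
  intros H i j Hi Hij Hn. destruct (Nat.eq_dec i j) as [->|Hne]; [lra|].
  left. apply (incr_lt e n H); lia.
Qed.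

Lemma Pp_deriv e n t : is_derive (Pp e n) t (DPp e n t).
Proof.
  revert t. induction n as [|m IH]; intros t; simpl.
  - auto_derive; auto.
  - pose proof (is_derive_mult (Pp e m) (fun t => t - e (S m)) t (DPp e m t) 1 (IH t)) as H.
    assert (Hd : is_derive (fun t0 : R => t0 - e (S m)) t 1).
    { auto_derive; auto. }
    specialize (H Hd (fun a b => Rmult_comm a b)).
    replace (DPp e m t * (t - e (S m)) + Pp e m t) with
      (plus (mult (DPp e m t) (t - e (S m))) (mult (Pp e m t) 1))
      by (unfold plus, mult; simpl; ring).
    exact H.
Qed.

Lemma Pp_zero e n t : Pp e n t = 0 <-> exists k, (1 <= k <= n)%nat /\ t = e k.
Proof.
  induction n as [|m IH]; simpl.
  - split; [intros; lra| intros [k [Hk _]]; lia].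
  - split.
    + intros H. apply Rmult_integral in H. destruct H as [H|H].
      * destruct (proj1 IH H) as [k [Hk Ht]]. exists k. split; [lia|auto].
      * exists (S m). split; [lia|lra].
    + intros [k [Hk Ht]]. destruct (Nat.eq_dec k (S m)) as [->|Hne].
      * rewrite Ht. ring.
      * rewrite (proj2 IH). ring. exists k. split; [lia|auto].
Qed.

Lemma DP_eq e n t : (forall k, (1 <= k <= n)%nat -> t <> e k) -> DPp e n t = Pp e n t * Ss e n t.
Proof.
  induction n as [|m IH]; intros H; simpl.
  - ring.
  - rewrite IH by (intros k Hk; apply H; lia).
    assert (t - e (S m) <> 0) by (specialize (H (S m) ltac:(lia)); lra).
    field. auto.
Qed.

Lemma DP_at_root e n j : incr e n -> (1 <= j <= n)%nat -> DPp e n (e j) <> 0.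
Proof.
  revert j. induction n as [|m IH]; intros j Hinc Hj; [lia|]. simpl.
  destruct (Nat.eq_dec j (S m)) as [->|Hne].
  - replace (e (S m) - e (S m)) with 0 by ring. rewrite Rmult_0_r, Rplus_0_l.
    intros H0. apply Pp_zero in H0. destruct H0 as [k [Hk Hek]].
    pose proof (incr_lt e (S m) Hinc k (S m) ltac:(lia) ltac:(lia) ltac:(lia)). lra.
  - assert (Pp e m (e j) = 0) by (apply Pp_zero; exists j; split; [lia|auto]).
    rewrite H. rewrite Rplus_0_r.
    apply Rmult_integral_contrapositive. split.
    + apply IH; [apply (incr_le e (S m)); auto|lia].
    + pose proof (incr_lt e (S m) Hinc j (S m) ltac:(lia) ltac:(lia) ltac:(lia)). lra.
Qed.

Lemma Ss_dec_le e n t1 t2 : (forall k, (1 <= k <= n)%nat -> 0 < (t1 - e k) * (t2 - e k)) ->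
  t1 < t2 -> Ss e n t2 <= Ss e n t1.
Proof.
  induction n as [|m IH]; intros H Ht; simpl; [lra|].
  assert (Hm := IH ltac:(intros k Hk; apply H; lia) Ht).
  specialize (H (S m) ltac:(lia)).
  assert (/ (t2 - e (S m)) < / (t1 - e (S m))).
  { assert (Hne1 : t1 - e (S m) <> 0) by (intro Z; rewrite Z in H; lra).
    assert (Hne2 : t2 - e (S m) <> 0) by (intro Z; rewrite Z in H; lra).
    assert (/ (t1 - e (S m)) - / (t2 - e (S m)) = (t2 - t1) / ((t1 - e (S m)) * (t2 - e (S m)))) by (field; auto).
    assert (0 < (t2 - t1) / ((t1 - e (S m)) * (t2 - e (S m)))) by (apply Rdiv_lt_0_compat; lra).
    lra. }
  lra.
Qed.

Lemma Ss_dec e n t1 t2 : (forall k, (1 <= k <= n)%nat -> 0 < (t1 - e k) * (t2 - e k)) ->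
  t1 < t2 -> (1 <= n)%nat -> Ss e n t2 < Ss e n t1.
Proof.
  destruct n as [|m]; intros H Ht Hn; [lia|]. simpl.
  assert (Hm := Ss_dec_le e m t1 t2 ltac:(intros k Hk; apply H; lia) Ht).
  specialize (H (S m) ltac:(lia)).
  assert (/ (t2 - e (S m)) < / (t1 - e (S m))).
  { assert (Hne1 : t1 - e (S m) <> 0) by (intro Z; rewrite Z in H; lra).
    assert (Hne2 : t2 - e (S m) <> 0) by (intro Z; rewrite Z in H; lra).
    assert (/ (t1 - e (S m)) - / (t2 - e (S m)) = (t2 - t1) / ((t1 - e (S m)) * (t2 - e (S m)))) by (field; auto).
    assert (0 < (t2 - t1) / ((t1 - e (S m)) * (t2 - e (S m)))) by (apply Rdiv_lt_0_compat; lra).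
    lra. }
  lra.
Qed.

Lemma Ss_neg e n t : (forall k, (1 <= k <= n)%nat -> t < e k) -> (1 <= n)%nat -> Ss e n t < 0.
Proof.
  induction n as [|m IH]; intros H Hn; [lia|]. simpl.
  assert (Hl : / (t - e (S m)) < 0) by (apply Rinv_lt_0_compat; specialize (H (S m) ltac:(lia)); lra).
  destruct m as [|m]; [simpl; lra|].
  assert (Ss e (S m) t < 0) by (apply IH; [intros k Hk; apply H; lia| lia]). lra.
Qed.

Lemma Ss_pos e n t : (forall k, (1 <= k <= n)%nat -> e k < t) -> (1 <= n)%nat -> 0 < Ss e n t.
Proof.
  induction n as [|m IH]; intros H Hn; [lia|]. simpl.
  assert (Hl : 0 < / (t - e (S m))) by (apply Rinv_0_lt_compat; specialize (H (S m) ltac:(lia)); lra).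
  destruct m as [|m]; [simpl; lra|].
  assert (0 < Ss e (S m) t) by (apply IH; [intros k Hk; apply H; lia| lia]). lra.
Qed.

Lemma locate e n t : (1 <= n)%nat -> incr e n -> e 1%nat < t < e n -> (forall k, (1 <= k <= n)%nat -> t <> e k) ->
  exists i, (1 <= i < n)%nat /\ e i < t < e (S i).
Proof.
  induction n as [|m IH]; intros Hn1 Hinc Ht Hne.
  - lia.
  - destruct m as [|m]; [lra|].
    destruct (Rtotal_order t (e (S m))) as [H|[H|H]].
    + destruct IH as [i [Hi Hi2]].
      * lia.
      * apply (incr_le e (S (S m))); auto.
      * lra.
      * intros k Hk; apply Hne; lia.
      * exists i. split; [lia|auto].
    + exfalso. apply (Hne (S m)); [lia|auto].
    + exists (S m). split; [lia|lra].
Qed.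

Lemma same_side e n i t1 t2 : incr e n -> (1 <= i < n)%nat ->
  e i < t1 < e (S i) -> e i < t2 < e (S i) ->
  forall k, (1 <= k <= n)%nat -> 0 < (t1 - e k) * (t2 - e k).
Proof.
  intros Hinc Hi H1 H2 k Hk.
  destruct (le_lt_dec k i) as [Hki|Hki].
  - pose proof (incr_le' e n Hinc k i ltac:(lia) Hki ltac:(lia)). nra.
  - pose proof (incr_le' e n Hinc (S i) k ltac:(lia) ltac:(lia) ltac:(lia)). nra.
Qed.

Lemma crit e n : incr e n -> (1 <= n)%nat ->
  exists zs : nat -> R,
    (forall i, (1 <= i < n)%nat -> e i < zs i < e (S i) /\ DPp e n (zs i) = 0) /\
    (forall t, DPp e n t = 0 -> exists i, (1 <= i < n)%nat /\ t = zs i).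
Proof.
  intros Hinc Hn.
  assert (Hex : forall i, exists z, (1 <= i < n)%nat -> e i < z < e (S i) /\ DPp e n z = 0).
  { intros i. destruct (le_lt_dec 1 i) as [H1|H1]; [|exists 0; intros; lia].
    destruct (le_lt_dec n i) as [H2|H2]; [exists 0; intros; lia|].
    assert (Hlt : e i < e (S i)) by (apply Hinc; lia).
    destruct (MVT_gen (Pp e n) (e i) (e (S i)) (DPp e n)) as [z [Hz Hz2]].
    - intros; apply Pp_deriv.
    - intros. apply continuity_pt_filterlim. apply (ex_derive_continuous (Pp e n)).
      eexists; apply Pp_deriv.
    - rewrite Rmin_left in Hz by lra. rewrite Rmax_right in Hz by lra.
      assert (Hp1 : Pp e n (e i) = 0) by (apply Pp_zero; exists i; split; [lia|auto]).
      assert (Hp2 : Pp e n (e (S i)) = 0) by (apply Pp_zero; exists (S i); split; [lia|auto]).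
      rewrite Hp1, Hp2 in Hz2.
      assert (HD : DPp e n z = 0).
      { assert (DPp e n z * (e (S i) - e i) = 0) by lra.
        apply Rmult_integral in H. destruct H; [auto|lra]. }
      exists z. intros _. split; [|auto].
      destruct Hz as [Hz1 Hz3]. split.
      + destruct Hz1 as [Hz1|Hz1]; auto. subst z.
        exfalso. apply (DP_at_root e n i Hinc ltac:(lia)). auto.
      + destruct Hz3 as [Hz3|Hz3]; auto. subst z.
        exfalso. apply (DP_at_root e n (S i) Hinc ltac:(lia)). auto. }
  exists (fun i => proj1_sig (constructive_indefinite_description _ (Hex i))).
  split.
  - intros i Hi. destruct (constructive_indefinite_description _ (Hex i)) as [z Hz]. simpl.
    apply Hz; auto.
  - intros t Ht.
    assert (Hne : forall k, (1 <= k <= n)%nat -> t <> e k).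
    { intros k Hk Heq. subst t. apply (DP_at_root e n k Hinc Hk Ht). }
    assert (HS : Ss e n t = 0).
    { rewrite DP_eq in Ht by auto. apply Rmult_integral in Ht. destruct Ht as [Ht|Ht]; auto.
      apply Pp_zero in Ht. destruct Ht as [k [Hk Hek]]. exfalso; apply (Hne k Hk Hek). }
    destruct (Rlt_or_le t (e 1%nat)) as [Hlo|Hlo].
    { exfalso. assert (Ss e n t < 0); [|lra]. apply Ss_neg; auto.
      intros k Hk. pose proof (incr_le' e n Hinc 1 k ltac:(lia) ltac:(lia) ltac:(lia)). lra. }
    destruct (Rlt_or_le (e n) t) as [Hhi|Hhi].
    { exfalso. assert (0 < Ss e n t); [|lra]. apply Ss_pos; auto.
      intros k Hk. pose proof (incr_le' e n Hinc k n ltac:(lia) ltac:(lia) ltac:(lia)). lra. }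
    assert (H1 : t <> e 1%nat) by (apply Hne; lia).
    assert (H2 : t <> e n) by (apply Hne; lia).
    destruct (locate e n t Hn Hinc ltac:(lra) Hne) as [i [Hi Hti]].
    exists i. split; auto.
    destruct (constructive_indefinite_description _ (Hex i)) as [z Hz]. simpl.
    destruct (Hz Hi) as [Hzi HDz].
    assert (Hzne : forall k, (1 <= k <= n)%nat -> z <> e k).
    { intros k Hk Heq. subst z. apply (DP_at_root e n k Hinc Hk HDz). }
    assert (HSz : Ss e n z = 0).
    { rewrite DP_eq in HDz by auto. apply Rmult_integral in HDz. destruct HDz as [Hd|Hd]; auto.
      apply Pp_zero in Hd. destruct Hd as [k [Hk Hek]]. exfalso; apply (Hzne k Hk Hek). }
    destruct (Rtotal_order t z) as [Hc|[Hc|Hc]]; auto.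
    + pose proof (Ss_dec e n t z (same_side e n i t z Hinc Hi Hti Hzi) Hc Hn). lra.
    + pose proof (Ss_dec e n z t (same_side e n i z t Hinc Hi Hzi Hti) Hc Hn). lra.
Qed.

Lemma Tprod_P c d n x : Tprod c d n x = Pp (fun k => / d k ^ 2) n (calT c x).
Proof. induction n as [|m IH]; simpl; [reflexivity|]. rewrite IH. reflexivity. Qed.

Lemma Tprod_deriv c d n x : 0 < c -> lam_plus c < x ->
  exists D, D <> 0 /\ is_derive (Tprod c d n) x (D * DPp (fun k => / d k ^ 2) n (calT c x)).
Proof.
  intros Hc Hx. destruct (T_facts c x Hc Hx) as [_ [_ [_ [D [HD HD0]]]]].
  exists D. split; auto.
  eapply is_derive_ext. { intros t. symmetry. apply Tprod_P. }
  pose proof (is_derive_comp (Pp (fun k => / d k ^ 2) n) (calT c) x _ D (Pp_deriv _ n (calT c x)) HD) as H.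
  exact H.
Qed.

Theorem lemma4p6 (c : R) (s : nat) (d : nat -> R) :
  0 < c ->
  (1 <= s)%nat ->
  (forall i : nat, (1 <= i < s)%nat -> d (S i) < d i) ->
  (forall i : nat, (1 <= i <= s)%nat -> Rpower c (- / 4) < d i) ->
  (* (1) the solutions of T^s(x) = 0 on (lam+, oo) are exactly the s distinct p_i *)
  ((forall i : nat, (1 <= i <= s)%nat -> lam_plus c < pfun c (d i)) /\
   (forall i : nat, (1 <= i < s)%nat -> pfun c (d (S i)) < pfun c (d i)) /\
   (forall x : R, lam_plus c < x ->
      (Tprod c d s x = 0 <-> exists i : nat, (1 <= i <= s)%nat /\ x = pfun c (d i)))) /\
  (* (2) T^s is differentiable on (lam+, oo) and its critical points there are
         exactly x_1, ..., x_{s-1}, with x_i in (p_{i+1}, p_i) *)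
  ((forall x : R, lam_plus c < x -> ex_derive (Tprod c d s) x) /\
   exists xs : nat -> R,
     (forall i : nat, (1 <= i < s)%nat ->
        pfun c (d (S i)) < xs i < pfun c (d i) /\ is_derive (Tprod c d s) (xs i) 0) /\
     (forall y : R, lam_plus c < y -> is_derive (Tprod c d s) y 0 ->
        exists i : nat, (1 <= i < s)%nat /\ y = xs i)) /\
  (* (3) T is strictly decreasing on (lam+, oo) *)
  (forall x y : R, lam_plus c < x -> x < y -> calT c y < calT c x).
Proof.
  intros Hc Hs Hdec Hlow.
  set (e := fun k => / d k ^ 2).
  assert (Hsc : 0 < sqrt c) by (apply sqrt_lt_R0; lra).
  assert (Hrs : / sqrt c * sqrt c = 1) by (field; lra).
  assert (He : forall i, (1 <= i <= s)%nat -> 0 < d i /\ 0 < e i /\ / sqrt c * e i < 1).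
  { intros i Hi. apply e_bounds; auto. }
  assert (Hinc : incr e s).
  { intros i Hi. destruct (He i ltac:(lia)) as [Hd1 _]. destruct (He (S i) ltac:(lia)) as [Hd2 _].
    specialize (Hdec i Hi). unfold e. apply Rinv_lt_contravar.
    - apply Rmult_lt_0_compat; apply pow_lt; lra.
    - simpl. nra. }
  assert (Hp : forall i, (1 <= i <= s)%nat -> pfun c (d i) = hh c (e i)).
  { intros i Hi. apply pfun_hh; auto. destruct (He i Hi); lra. }
  assert (Hesc : forall t, / sqrt c * t < 1 -> t < sqrt c).
  { intros t Ht. apply (Rmult_lt_reg_l (/ sqrt c)); [apply Rinv_0_lt_compat; lra|]. lra. }
  assert (Hlp : forall t, 0 < t -> / sqrt c * t < 1 -> lam_plus c < hh c t).
  { intros t Ht1 Ht2. rewrite lam_plus_hh by auto. apply hh_dec; [auto| split; [auto| apply Hesc; auto] | lra]. }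
  split; [split; [|split]|split; [split|]].
  - intros i Hi. rewrite Hp by auto. destruct (He i Hi) as [_ [H1 H2]]. auto.
  - intros i Hi. rewrite !Hp by lia. destruct (He (S i) ltac:(lia)) as [_ [H1 H2]].
    destruct (He i ltac:(lia)) as [_ [H3 H4]].
    apply hh_dec; [auto | split; [auto | apply Hinc; lia] | lra].
  - intros x Hx. rewrite Tprod_P. fold e. rewrite Pp_zero. split.
    + intros [k [Hk Hxk]]. exists k. split; auto. rewrite Hp by auto.
      destruct (He k Hk) as [_ [H1 H2]]. apply (T_eq c x (e k)); auto.
    + intros [k [Hk Hxk]]. exists k. split; auto. rewrite Hp in Hxk by auto.
      destruct (He k Hk) as [_ [H1 H2]]. apply (T_eq c x (e k)); auto.
  - intros x Hx. destruct (Tprod_deriv c d s x Hc Hx) as [D [_ HD]]. eexists; eauto.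
  - destruct (crit e s Hinc Hs) as [zs [Hz1 Hz2]].
    exists (fun i => hh c (zs i)). split.
    + intros i Hi. destruct (Hz1 i Hi) as [[Hzl Hzh] HDz].
      destruct (He i ltac:(lia)) as [_ [H1 H2]]. destruct (He (S i) ltac:(lia)) as [_ [H3 H4]].
      assert (Hzr : / sqrt c * zs i < 1).
      { apply Rle_lt_trans with (/ sqrt c * e (S i)); auto.
        apply Rmult_le_compat_l; [left; apply Rinv_0_lt_compat; lra|lra]. }
      assert (Hxl : lam_plus c < hh c (zs i)) by (apply Hlp; lra).
      split; [split|].
      * rewrite Hp by lia. apply hh_dec; [auto | split; lra | lra].
      * rewrite Hp by lia. apply hh_dec; [auto | split; lra | lra].
      * destruct (Tprod_deriv c d s (hh c (zs i)) Hc Hxl) as [D [_ HD]].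
        assert (HT : calT c (hh c (zs i)) = zs i) by (apply T_eq; auto; lra).
        fold e in HD. rewrite HT, HDz, Rmult_0_r in HD. exact HD.
    + intros y Hy HD0.
      destruct (Tprod_deriv c d s y Hc Hy) as [D [HDn HD]].
      apply is_derive_unique in HD. apply is_derive_unique in HD0.
      rewrite HD0 in HD. fold e in HD.
      assert (HDP : DPp e s (calT c y) = 0).
      { symmetry in HD. apply Rmult_integral in HD. destruct HD; [contradiction|auto]. }
      destruct (Hz2 _ HDP) as [i [Hi Hyi]]. exists i. split; auto.
      destruct (T_facts c y Hc Hy) as [_ [_ [Hyh _]]]. rewrite Hyh, Hyi. reflexivity.
  - intros x y Hx Hxy. apply T_dec; auto.
Qed.
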